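(* Let $G$ be a group and $A$ an additive abelian group with a right $G$-action by group automorphisms. For $k\ge0$ let $\partial_k:\mathcal C^k(G,A)\to\mathcal C^{k+1}(G,A)$ be $(\partial_kc)(g_1,\dots,g_{k+1})=[c(g_1,\dots,g_k)]^{g_{k+1}}-c(g_1,\dots,g_k)$ (so $D^{n}=\partial_{n-1}\cdots\partial_0$). Then for every $n\ge1$: (1) $\delta^n\partial_{n-1}=\partial_n\delta^{n-1}+(-1)^n\partial_n\partial_{n-1}$ on $\mathcal C^{n-1}(G,A)$; (2) $\delta^nD^n=\partial_n\delta^{n-1}D^{n-1}+(-1)^nD^{n+1}$; (3) $\delta^nD^n=-D^{n+1}$ if $n$ is odd and $\delta^nD^n=0$ if $n$ is even (the latter also for $n=0$).
   Context: Right action: $a\mapsto a^g$, $a^{\mathbf e}=a$, $(a^g)^h=a^{gh}$, additive in $a$; $\mathbf e$ the identity of $G$. $\mathcal C^0(G,A)=A$; for $n\ge1$, $\mathcal C^n(G,A)$ is the group of functions $G^n\to A$ vanishing whenever some argument is $\mathbf e$. $D^0=\mathrm{id}_A$ and $D^n=\partial_{n-1}D^{n-1}$. The coboundary operator for the trivial left action, $\delta^n:\mathcal C^n(G,A)\to\mathcal C^{n+1}(G,A)$, is $[\delta^nc](g_1,\dots,g_{n+1})=c(g_2,\dots,g_{n+1})+\sum_{i=1}^{n}(-1)^ic(g_1,\dots,g_ig_{i+1},\dots,g_{n+1})+(-1)^{n+1}c(g_1,\dots,g_n)$; in particular $\delta^0=0$. *)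

(* Defs.v *)
From HB Require Import structures.
From mathcomp Require Import all_boot all_order all_algebra.
Set Implicit Arguments. Unset Strict Implicit. Unset Printing Implicit Defensive.
Import Order.TTheory GRing.Theory Num.Theory.
Local Open Scope ring_scope.

Section Cochains.
Variables (G : Type) (mul : G -> G -> G) (e : G) (A : zmodType) (act : A -> G -> A).

Definition cochain (n : nat) := {ffun 'I_n -> G} -> A.

Definition normalized (n : nat) (c : cochain n) : Prop :=
  forall g : {ffun 'I_n -> G}, (exists i, g i = e) -> c g = 0.

Definition tailf (n : nat) (g : {ffun 'I_n.+1 -> G}) : {ffun 'I_n -> G} :=
  [ffun j : 'I_n => g (lift ord0 j)].

Definition initf (n : nat) (g : {ffun 'I_n.+1 -> G}) : {ffun 'I_n -> G} :=
  [ffun j : 'I_n => g (widen_ord (leqnSn n) j)].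

(* 0-indexed i : (g_0,...,g_n) |-> (g_0,...,g_i g_{i+1},...,g_n) *)
Definition mergef (n : nat) (i : 'I_n) (g : {ffun 'I_n.+1 -> G}) : {ffun 'I_n -> G} :=
  [ffun j : 'I_n => if (j < i)%N then g (widen_ord (leqnSn n) j)
                    else if j == i then mul (g (widen_ord (leqnSn n) j)) (g (lift ord0 j))
                    else g (lift ord0 j)].

(* coboundary for the trivial left action:
   [delta^n c](g_1..g_{n+1}) = c(g_2..g_{n+1})
      + sum_{i=1}^n (-1)^i c(g_1,..,g_i g_{i+1},..,g_{n+1}) + (-1)^{n+1} c(g_1..g_n) *)
Definition delta (n : nat) (c : cochain n) : cochain n.+1 :=
  fun g => c (tailf g)
           + \sum_(i < n) (c (mergef i g)) *~ ((-1) ^+ i.+1)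
           + (c (initf g)) *~ ((-1) ^+ n.+1).

Definition pdel (k : nat) (c : cochain k) : cochain k.+1 :=
  fun g => act (c (initf g)) (g ord_max) - c (initf g).

Unset Implicit Arguments.
Fixpoint Dop (n : nat) : A -> cochain n :=
  match n return A -> cochain n with
  | 0 => fun a _ => a
  | m.+1 => fun a => pdel (Dop m a)
  end.

Set Implicit Arguments.
End Cochains.
Arguments Dop {G A} act n a _.

(* Main.v *)
Require Import Defs.
From HB Require Import structures.
From mathcomp Require Import all_boot all_order all_algebra.
Import GRing.Theory.
Local Open Scope ring_scope.

Section L.
Variables (G : Type) (mul : G -> G -> G).

Lemma init_tail n (g : {ffun 'I_n.+2 -> G}) : initf (tailf g) = tailf (initf g).
Proof. apply/ffunP=> j; rewrite !ffunE; congr (g _); exact: val_inj. Qed.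

Lemma tail_max n (g : {ffun 'I_n.+2 -> G}) : (tailf g) ord_max = g ord_max.
Proof. rewrite ffunE; congr (g _); exact: val_inj. Qed.

Lemma init_merge n (i : 'I_n) (g : {ffun 'I_n.+2 -> G}) :
  initf (mergef mul (widen_ord (leqnSn n) i) g) = mergef mul i (initf g).
Proof.
apply/ffunP=> j; rewrite !ffunE /=.
have -> : (widen_ord (leqnSn n) j == widen_ord (leqnSn n) i) = (j == i).
  by rewrite -val_eqE.
case: ifP => _; first by congr (g _); exact: val_inj.
case: ifP => _; last by congr (g _); exact: val_inj.
congr (mul (g _) (g _)); exact: val_inj.
Qed.

Lemma merge_max n (i : 'I_n) (g : {ffun 'I_n.+2 -> G}) :
  (mergef mul (widen_ord (leqnSn n) i) g) ord_max = g ord_max.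
Proof.
rewrite !ffunE /= ltnNge (ltnW (ltn_ord i)) /=.
have -> : (ord_max == widen_ord (leqnSn n) i :> 'I_n.+1) = false.
  by apply/negbTE; rewrite -val_eqE /= neq_ltn ltn_ord orbT.
congr (g _); exact: val_inj.
Qed.

Lemma init_mergemax n (g : {ffun 'I_n.+2 -> G}) :
  initf (mergef mul ord_max g) = initf (initf g).
Proof.
apply/ffunP=> j; rewrite !ffunE /= ltn_ord; congr (g _); exact: val_inj.
Qed.

Lemma mergemax_max n (g : {ffun 'I_n.+2 -> G}) :
  (mergef mul ord_max g) ord_max = mul ((initf g) ord_max) (g ord_max).
Proof.
rewrite !ffunE /= ltnn eqxx; congr (mul (g _) (g _)); exact: val_inj.
Qed.
End L.
Lemma zid (A:zmodType) (P Q S2 S3 a b d e: A): P - Q + (S2 - S3 + (a - d)) - (b - d) = P + S2 + e - (Q + S3 + d) + (a - e - (b - d)).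
Proof.
rewrite !opprD !opprK !addrA; congr (_ - b + d).
rewrite [RHS](addrAC _ a (- e)) [P + S2 + e - Q - S3 - d - e](addrAC _ (- d) (- e)).
rewrite [P + S2 + e - Q - S3 - e](addrAC _ (- S3) (- e)) [P + S2 + e - Q - e](addrAC _ (- Q) (- e)) addrK.
by rewrite [LHS](addrAC _ a (-d)) (addrAC P S2 (-Q)).
Qed.
Theorem lemma1p21
  (G : Type) (mul : G -> G -> G) (e : G) (inv : G -> G)
  (mulA : forall x y z, mul x (mul y z) = mul (mul x y) z)
  (mul1g : forall x, mul e x = x) (mulg1 : forall x, mul x e = x)
  (mulVg : forall x, mul (inv x) x = e) (mulgV : forall x, mul x (inv x) = e)
  (A : zmodType) (act : A -> G -> A)
  (act1 : forall a, act a e = a)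
  (actM : forall a g h, act (act a g) h = act a (mul g h))
  (actD : forall a b g, act (a + b) g = act a g + act b g) :
  (* (1), n = m+1 >= 1, on C^{n-1} *)
  (forall (m : nat) (c : cochain G A m), normalized e c ->
     forall g : {ffun 'I_m.+2 -> G},
       delta mul (pdel act c) g
       = pdel act (delta mul c) g
         + (pdel act (pdel act c) g) *~ ((-1) ^+ m.+1))
  /\
  (* (2), n = m+1 >= 1 *)
  (forall (m : nat) (a : A) (g : {ffun 'I_m.+2 -> G}),
       delta mul (Dop act m.+1 a) g
       = pdel act (delta mul (Dop act m a)) g
         + (Dop act m.+2 a g) *~ ((-1) ^+ m.+1))
  /\
  (* (3), all n >= 0 *)
  (forall (n : nat) (a : A) (g : {ffun 'I_n.+1 -> G}),
       delta mul (Dop act n a) g = if odd n then - Dop act n.+1 a g else 0).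
Proof.
have act0 g : act 0 g = 0.
  by have h := actD 0 0 g; rewrite addr0 in h; apply: (addrI (act 0 g)); rewrite -h addr0.
have actN x g : act (- x) g = - act x g.
  by apply/eqP; rewrite -subr_eq0 opprK -actD addNr act0.
have actB x y g : act (x - y) g = act x g - act y g by rewrite actD actN.
have actMn x g k : act (x *+ k) g = act x g *+ k.
  by elim: k => [|k IH]; rewrite ?mulr0n ?act0 // !mulrS actD IH.
have actz x g (z : int) : act (x *~ z) g = act x g *~ z.
  by case: z => k; rewrite /intmul ?actN actMn.
have act_sum I (r : seq I) (F : I -> A) g : act (\sum_(i <- r) F i) g = \sum_(i <- r) act (F i) g.
  by elim: r => [|x r IH]; rewrite ?big_nil ?act0 // !big_cons actD IH.
have P1 : forall (m : nat) (c : cochain G A m),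
     forall g : {ffun 'I_m.+2 -> G},
       delta mul (pdel act c) g
       = pdel act (delta mul c) g
         + (pdel act (pdel act c) g) *~ ((-1) ^+ m.+1).
  move=> m c g; rewrite /delta /pdel big_ord_recr /=.
  rewrite init_tail tail_max init_mergemax mergemax_max.
  under eq_bigr do rewrite init_merge merge_max.
  rewrite !actD act_sum actz ?actB actM actN.
  have -> : \sum_(i<m) act (c (mergef mul i (initf g)) *~ (-1)^+i.+1) (g ord_max) = \sum_(i<m) act (c (mergef mul i (initf g))) (g ord_max) *~ (-1)^+i.+1.
    by apply: eq_bigr => i _; rewrite actz.
  under eq_bigr do rewrite mulrzBl.
  rewrite sumrB [((-1) ^+ m.+2)]exprS mulN1r mulrNz.
  set s := ((-1) ^+ m.+1 : int).
  rewrite !mulrzBl; exact: zid.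
have P2 : forall (m : nat) (a : A) (g : {ffun 'I_m.+2 -> G}),
       delta mul (Dop act m.+1 a) g
       = pdel act (delta mul (Dop act m a)) g
         + (Dop act m.+2 a g) *~ ((-1) ^+ m.+1).
  by move=> m a g; exact: P1.
split; first by move=> m c _ g; exact: P1.
split; first exact: P2.
elim=> [|n IH] a g.
  by rewrite /delta /= big_ord0 addr0 expr1 mulrN1z subrr.
have H : pdel act (delta mul (Dop act n a)) g = if odd n then - Dop act n.+2 a g else 0.
  rewrite /pdel IH; case: (odd n) => /=; last by rewrite act0 subr0.
  by rewrite actN -opprD.
rewrite P2 H -signr_odd /=; case: (odd n) => /=.
  by rewrite expr0 mulr1z addNr.
by rewrite expr1 mulrN1z add0r.
Qed.
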